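(* If an $n$-Brinkhuis triple pair exists, then $n\ge 18$. Moreover, $n=18$ is attained: taking <ul> <li>$\mathcal{B}^{(0)}=\{012021020102120210,\ 012021201020120210\}$,</li> <li>$\mathcal{B}^{(1)}=\tau(\mathcal{B}^{(0)})$,</li> <li>$\mathcal{B}^{(2)}=\tau^2(\mathcal{B}^{(0)})$</li> </ul> gives an $18$-Brinkhuis triple pair.
   Context: Let $\Sigma=\{0,1,2\}$. A word over $\Sigma$ is square-free if it cannot be written as $xyyz$ with $y$ nonempty. $\mathcal{A}(n)$ is the set of square-free words of length $n$. $\tau$ is the letter permutation $0\mapsto1$, $1\mapsto2$, $2\mapsto0$, applied letterwise to words and elementwise to sets of words. An $n$-Brinkhuis triple pair consists of three sets $\mathcal{B}^{(0)},\mathcal{B}^{(1)},\mathcal{B}^{(2)}\subset\mathcal{A}(n)$. Each $\mathcal{B}^{(i)}$ has two distinct square-free words of length $n$. The defining condition: for every square-free word $w_1w_2w_3\in\mathcal{A}(3)$ and every choice $W_j\in\mathcal{B}^{(w_j)}$ for $j=1,2,3$, the concatenation $W_1W_2W_3$ is square-free. *)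

(* Defs.v *)
From mathcomp Require Import all_boot.
Set Implicit Arguments. Unset Strict Implicit. Unset Printing Implicit Defensive.

Notation letter := 'I_3.
Notation word := (seq letter).

Definition square_free (w : word) : Prop :=
  ~ exists x y z : word, y <> [::] /\ w = x ++ y ++ y ++ z.

Definition L0 : letter := @Ordinal 3 0 isT.
Definition L1 : letter := @Ordinal 3 1 isT.
Definition L2 : letter := @Ordinal 3 2 isT.
Definition letter_of (k : nat) : letter :=
  match k with 0 => L0 | 1 => L1 | _ => L2 end.
Definition tau (a : letter) : letter := letter_of ((nat_of_ord a).+1 %% 3).
Definition tau_word (w : word) : word := map tau w.
Definition tau_set (S : seq word) : seq word := map tau_word S.

Definition brinkhuis_triple_pair (n : nat) (B : letter -> seq word) : Prop :=
  (forall i : letter,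
     size (B i) = 2 /\ uniq (B i) /\
     forall W, W \in B i -> size W = n /\ square_free W) /\
  (forall w : word, size w = 3 -> square_free w ->
     forall W1 W2 W3 : word,
       W1 \in B (nth ord0 w 0) -> W2 \in B (nth ord0 w 1) ->
       W3 \in B (nth ord0 w 2) ->
       square_free (W1 ++ W2 ++ W3)).

Definition word_of (s : seq nat) : word := map letter_of s.

Definition B0_ex : seq word :=
  [:: word_of [:: 0;1;2;0;2;1;0;2;0;1;0;2;1;2;0;2;1;0];
      word_of [:: 0;1;2;0;2;1;2;0;1;0;2;0;1;2;0;2;1;0]].

Definition B_ex (i : letter) : seq word :=
  match nat_of_ord i with
  | 0 => B0_ex
  | 1 => tau_set B0_ex
  | _ => tau_set (tau_set B0_ex)
  end.

(* Main.v *)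
Require Import Defs.
From mathcomp Require Import all_boot zify.
Set Implicit Arguments. Unset Strict Implicit. Unset Printing Implicit Defensive.

Fixpoint prefeq (l : nat) (u v : word) : bool :=
  match l with 0 => true | l'.+1 =>
    match u with [::] => false | a :: u' =>
    match v with [::] => false | b :: v' => if eqn a b then prefeq l' u' v' else false end end end.
Fixpoint sqs (s d : word) (l : nat) : bool :=
  match d with [::] => false | _ :: d' => if prefeq l s d then true else sqs s d' l.+1 end.
Definition sqp (s : word) : bool := match s with [::] => false | _ :: d => sqs s d 1 end.
Fixpoint hsq (w : word) : bool :=
  match w with [::] => false | _ :: w' => if sqp w then true else hsq w' end.
Fixpoint hasb {T} (p : T -> bool) (s : seq T) : bool :=
  match s with [::] => false | x :: s' => if p x then true else hasb p s' end.
Fixpoint allb {T} (p : T -> bool) (s : seq T) : bool :=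
  match s with [::] => true | x :: s' => if p x then allb p s' else false end.
Definition letters : seq letter := [:: L0; L1; L2].
Fixpoint gen (n : nat) : seq word :=
  match n with 0 => [:: [::]] | n'.+1 =>
   let G := gen n' in flatten [seq [seq c :: w | w <- G & ~~ sqp (c :: w)] | c <- letters] end.
Fixpoint extr (r : word) (k : nat) : seq word :=
  match k with 0 => [:: r] | k'.+1 =>
   flatten [seq [seq c :: s | c <- letters & ~~ sqp (c :: s)] | s <- extr r k'] end.
Definition K := 5.
Definition win (x y : word) := ~~ hsq (drop (size x - K) x ++ take K y).
Definition nbrs (n : nat) (x : word) : seq word :=
  [seq y <- [seq rev (take n r) | r <- extr (rev x) n] | if win y x then ~~ hsq (y ++ x) else false].
Definition G3 := Eval vm_compute in gen 3.
Definition good3 (t : word * word * word) :=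
  let f (a : letter) := match nat_of_ord a with 0 => t.1.1 | 1 => t.1.2 | _ => t.2 end in
  allb (fun w => ~~ hsq (f (nth ord0 w 0) ++ f (nth ord0 w 1) ++ f (nth ord0 w 2))) G3.
Fixpoint weq (u v : word) : bool :=
  match u, v with [::], [::] => true | a :: u', b :: v' => if eqn a b then weq u' v' else false | _, _ => false end.
Fixpoint windex (x : word) (s : seq word) : nat :=
  match s with [::] => 0 | y :: s' => if weq x y then 0 else (windex x s').+1 end.
Definition teq (t u : word * word * word) := if weq t.1.1 u.1.1 then if weq t.1.2 u.1.2 then weq t.2 u.2 else false else false.
Definition Mlist (n : nat) : seq (word * word * word) :=
  let G := gen n in let NB := [seq nbrs n x | x <- G] in
  let nb x := nth [::] NB (windex x G) in
  flatten [seq (let C := nb x0 in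
     flatten [seq [seq (x0, x1, x2) | x2 <- C & if hasb (weq x2) (nb x1) then good3 (x0,x1,x2) else false] | x1 <- C]) | x0 <- G].
Definition cube (n : nat) :=
  let M := Mlist n in
  hasb (fun t => hasb (fun t' =>
    if weq t.1.1 t'.1.1 then false else if weq t.1.2 t'.1.2 then false else if weq t.2 t'.2 then false else
     allb (fun c => hasb (teq c) M) [:: (t'.1.1, t.1.2, t.2); (t.1.1, t'.1.2, t.2); (t.1.1, t.1.2, t'.2);
        (t'.1.1, t'.1.2, t.2); (t'.1.1, t.1.2, t'.2); (t.1.1, t'.1.2, t'.2)]) M) M.

Definition sq (w : word) := exists x y z : word, y <> [::] /\ w = x ++ y ++ y ++ z.

Lemma eqnL (a b : letter) : eqn a b = (a == b).
Proof. by rewrite eqnE val_eqE. Qed.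

Lemma prefeqP l u v : prefeq l u v = true <->
  exists y u' v', size y = l /\ u = y ++ u' /\ v = y ++ v'.
Proof.
elim: l u v => [|l IH] u v.
  by split=> // _; exists [::], u, v.
case: u => [|a u]; case: v => [|b v] /=.
- by split=> // -[[|c y] [u' [v' [Hs [Hu Hv]]]]].
- by split=> // -[[|c y] [u' [v' [Hs [Hu Hv]]]]].
- by split=> // -[[|c y] [u' [v' [Hs [Hu Hv]]]]].
rewrite eqnL; case: eqP => [<-|ne].
  split.
    by move/IH=> [y [u' [v' [Hs [-> ->]]]]]; exists (a :: y), u', v'; rewrite /= Hs.
  move=> [[|c y] [u' [v' [Hs [Hu Hv]]]]] //.
  case: Hu => _ Hu; case: Hv => _ Hv.
  by apply/IH; exists y, u', v'; case: Hs => Hs.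
split=> // -[[|c y] [u' [v' [Hs [Hu Hv]]]]] //.
by case: Hu => E1 _; case: Hv => E2 _; case: ne; rewrite E1 E2.
Qed.

Lemma cat_same (t y X Y : word) : size y = size t -> t ++ X = y ++ Y -> y = t /\ X = Y.
Proof.
move=> Hs E; split.
  by have := congr1 (take (size t)) E; rewrite !take_size_cat.
by have := congr1 (drop (size t)) E; rewrite !drop_size_cat.
Qed.

Lemma sqsP d t : 0 < size t -> (sqs (t ++ d) d (size t) = true <->
  exists y z, size t <= size y /\ t ++ d = y ++ y ++ z).
Proof.
elim: d t => [|a d IH] t Ht /=.
  split=> // -[y [z [Hle E]]].
  have := congr1 size E; rewrite !size_cat => E'.
  by move: Hle Ht E'; rewrite /= => *; exfalso; lia.
have IH' := IH (rcons t a); rewrite size_rcons in IH'; have {}IH' := IH' isT.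
rewrite -cats1 -catA /= in IH'.
case HP: (prefeq _ _ _).
  split=> // _.
  move/prefeqP: HP => [y [u' [v' [Hs [Hu Hv]]]]].
  have [Ey _] := cat_same Hs Hu; subst y.
  by exists t, v'; rewrite -Hv.
split.
  by move/IH'=> [y [z [Hle E]]]; exists y, z; split=> //; apply: ltnW.
move=> [y [z [Hle E]]].
case: (ltngtP (size t) (size y)) Hle => // [Hlt _|Heq _].
  by apply/IH'; exists y, z.
have [Ey Ed] := cat_same (esym Heq) E; subst y.
move: HP; have -> : prefeq (size t) (t ++ a :: d) (a :: d) = true.
  by apply/prefeqP; exists t, (a :: d), z.
by [].
Qed.

Lemma sqpP s : sqp s = true <-> exists y z, y <> [::] /\ s = y ++ y ++ z.
Proof.
case: s => [|a d] /=.
  by split=> // -[[|c y] [z [Hy E]]].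
have := sqsP d (t := [:: a]) isT; rewrite /= => HH.
split.
  by move/HH=> -[y [z [H E]]]; exists y, z; split=> //; case: y H {E}.
by move=> -[y [z [H E]]]; apply/HH; exists y, z; split=> //; case: y H E.
Qed.

Lemma hsqP w : hsq w = true <-> sq w.
Proof.
rewrite /sq; elim: w => [|a w IH].
  by split=> // -[x [[|c y] [z [Hy E]]]] //; case: x E.
have -> : hsq (a :: w) = if sqp (a :: w) then true else hsq w by [].
case H: (sqp (a :: w)).
  split=> // _; have [y [z [Hy E]]] := (sqpP (a :: w)).1 H.
  by exists nil; exists y, z.
split.
  by move/IH=> [x [y [z [Hy E]]]]; exists (a :: x), y, z; rewrite E.
move=> [[|b x] [y [z [Hy E]]]].
  by move: H; have -> : sqp (a :: w) = true by apply/sqpP; exists y, z.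
by case: E => _ E; apply/IH; exists x, y, z.
Qed.

Lemma sfP w : square_free w <-> hsq w = false.
Proof.
rewrite /square_free; split.
  by move=> H; apply/negbTE/negP => /hsqP.
by move=> H /hsqP; rewrite H.
Qed.

Lemma sf_sub a b c : square_free (a ++ b ++ c) -> square_free b.
Proof.
move=> H [x [y [z [Hy E]]]]; apply: H; exists (a ++ x), y, (z ++ c).
by rewrite E -!catA.
Qed.

Lemma sf_rev w : square_free w -> square_free (rev w).
Proof.
move=> H [x [y [z [Hy E]]]]; apply: H; exists (rev z), (rev y), (rev x); split.
  by case: y Hy {E} => // c y _; rewrite rev_cons; case: (rev y).
by rewrite -(revK w) E !rev_cat !catA.
Qed.

Lemma letter_cases (a : letter) : a = L0 \/ a = L1 \/ a = L2.
Proof.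
case: a => [[|[|[|m]]] H]; [left|right;left|right;right|by []]; exact: val_inj.
Qed.

Lemma genS n : gen n.+1 = flatten [seq [seq c :: w | w <- gen n & ~~ sqp (c :: w)] | c <- letters].
Proof. by []. Qed.

Lemma gen_complete n w : size w = n -> square_free w -> w \in gen n.
Proof.
elim: n w => [|n IH] [|c w] Hs Hsf //; rewrite genS.
apply/flatten_mapP; exists c.
  by case: (letter_cases c) => [->|[->|->]].
apply: map_f; rewrite mem_filter; apply/andP; split.
  by apply/negP => /sqpP [y [z [Hy E]]]; apply: Hsf; exists [::], y, z.
apply: IH; first by case: Hs.
by apply: (@sf_sub [:: c] w [::]); rewrite cats0.
Qed.

Lemma extrS r k : extr r k.+1 =
   flatten [seq [seq c :: s | c <- letters & ~~ sqp (c :: s)] | s <- extr r k].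
Proof. by []. Qed.

Lemma extr_complete x k y : size y = k -> square_free (x ++ y) -> rev (x ++ y) \in extr (rev x) k.
Proof.
elim: k y => [|k IH] y.
  by case: y => // _ _; rewrite cats0 /= inE.
case/lastP: y => [|y c] //; rewrite size_rcons => -[Hs] Hsf.
rewrite extrS -rcons_cat rev_rcons.
apply/flatten_mapP; exists (rev (x ++ y)).
  apply: IH => //; apply: (@sf_sub [::] (x ++ y) [:: c]).
  by rewrite /= -catA cats1.
apply/mapP; exists c => //; rewrite mem_filter; apply/andP; split.
  apply/negP => /sqpP [u [z [Hu E]]]; apply: (sf_rev Hsf).
  by exists [::], u, z; rewrite -rcons_cat rev_rcons.
by case: (letter_cases c) => [->|[->|->]].
Qed.

Lemma nbrs_complete n x y : size y = n -> square_free (x ++ y) -> square_free (y ++ x) ->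
  y \in nbrs n x.
Proof.
move=> Hs H1 H2; rewrite /nbrs mem_filter.
have -> : win y x = true.
  rewrite /win; apply/negbT/sfP.
  apply: (@sf_sub (take (size y - K) y) _ (drop K x)).
  by rewrite -catA cat_take_drop catA cat_take_drop.
have -> : hsq (y ++ x) = false by apply/sfP.
apply/andP; split=> //.
apply/mapP; exists (rev (x ++ y)); first exact: extr_complete.
by rewrite rev_cat take_size_cat ?size_rev // revK.
Qed.

Lemma weqE u v : weq u v = (u == v).
Proof.
elim: u v => [|a u IH] [|b v] //=; rewrite eqseq_cons eqnL.
by case: (a == b) => //=.
Qed.

Lemma windexE x s : windex x s = index x s.
Proof. by elim: s => //= y s IH; rewrite weqE eq_sym IH. Qed.

Lemma hasbE T (p : T -> bool) s : hasb p s = has p s.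
Proof. by elim: s => //= x s IH; rewrite IH; case: (p x). Qed.

Lemma allbE T (p : T -> bool) s : allb p s = all p s.
Proof. by elim: s => //= x s IH; rewrite IH; case: (p x). Qed.

Lemma teqE t u : teq t u = (t == u).
Proof.
case: t => [[a b] c]; case: u => [[a' b'] c'].
rewrite /teq /= !weqE !xpair_eqE.
by case: (a == a'); case: (b == b').
Qed.

Lemma nb_lookup n x : x \in gen n ->
  nth [::] [seq nbrs n x | x <- gen n] (windex x (gen n)) = nbrs n x.
Proof. by move=> Hx; rewrite windexE (nth_map [::]) ?index_mem // nth_index. Qed.

Lemma Mlist_complete n x0 x1 x2 : x0 \in gen n -> x1 \in gen n ->
  x1 \in nbrs n x0 -> x2 \in nbrs n x0 -> x2 \in nbrs n x1 -> good3 (x0, x1, x2) ->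
  (x0, x1, x2) \in Mlist n.
Proof.
move=> H0 H1 H01 H02 H12 Hg.
rewrite /Mlist; cbv beta zeta.
apply/flatten_mapP; exists x0 => //.
rewrite nb_lookup //.
apply/flatten_mapP; exists x1 => //.
apply: (map_f (fun x2 => (x0, x1, x2))); rewrite mem_filter nb_lookup // hasbE Hg.
have -> : has (weq x2) (nbrs n x1) by apply/hasP; exists x2 => //; rewrite weqE.
by rewrite H02.
Qed.

Lemma aba (a b : letter) : a != b -> square_free [:: a; b; a].
Proof.
move=> H; apply/sfP; move: H.
by case: (letter_cases a) => [->|[->|->]]; case: (letter_cases b) => [->|[->|->]].
Qed.

Lemma G3_ok : all (fun w => (size w == 3) && ~~ hsq w) G3.
Proof. by vm_compute. Qed.

Lemma no_cube : allb (fun n => ~~ cube n) (iota 0 18).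
Proof. by vm_compute. Qed.

Lemma lower (n : nat) (B : 'I_3 -> seq (seq 'I_3)) :
  brinkhuis_triple_pair n B -> 18 <= n.
Proof.
move=> [HB1 HB2]; rewrite leqNgt; apply/negP => Hn.
have := no_cube; rewrite allbE => /allP /(_ n); rewrite mem_iota /= => /(_ Hn).
apply/negP/negPn.
have pw : forall (a b : letter) W V, a != b -> W \in B a -> V \in B b -> square_free (W ++ V).
  move=> a b W V ab HW HV.
  have := HB2 [:: a; b; a] erefl (aba ab) W V W HW HV HW.
  by move=> H; apply: (@sf_sub [::] _ W); rewrite /= -catA.
have ingen : forall a W, W \in B a -> W \in gen n.
  move=> a W HW; have [_ [_ H]] := HB1 a; have [Hs Hsf] := H W HW.
  exact: gen_complete.
have szB : forall a W, W \in B a -> size W = n.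
  by move=> a W HW; have [_ [_ H]] := HB1 a; have [Hs Hsf] := H W HW.
have key : forall s0 s1 s2, s0 \in B L0 -> s1 \in B L1 -> s2 \in B L2 -> (s0, s1, s2) \in Mlist n.
  move=> s0 s1 s2 H0 H1 H2.
  apply: Mlist_complete.
  - exact: ingen H0.
  - exact: ingen H1.
  - by apply: nbrs_complete; [exact: szB H1|apply: (pw L0 L1)|apply: (pw L1 L0)].
  - by apply: nbrs_complete; [exact: szB H2|apply: (pw L0 L2)|apply: (pw L2 L0)].
  - by apply: nbrs_complete; [exact: szB H2|apply: (pw L1 L2)|apply: (pw L2 L1)].
  rewrite /good3 allbE; apply/allP => w Hw.
  have := G3_ok => /allP /(_ w Hw) /andP [Hs Hh].
  pose f (a : letter) := match nat_of_ord a with 0 => s0 | 1 => s1 | _ => s2 end.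
  change (~~ hsq (f (nth ord0 w 0) ++ f (nth ord0 w 1) ++ f (nth ord0 w 2))).
  have Hf : forall a, f a \in B a.
    by move=> a; case: (letter_cases a) => [->|[->|->]].
  apply/negbT/sfP; apply: HB2; first exact: (eqP Hs).
  - by apply/sfP; exact: negbTE Hh.
  - exact: Hf.
  - exact: Hf.
  - exact: Hf.
pose xs i := nth [::] (B i) 0; pose ys i := nth [::] (B i) 1.
have Hx : forall i, xs i \in B i by move=> i; have [Hs _] := HB1 i; rewrite /xs mem_nth // Hs.
have Hy : forall i, ys i \in B i by move=> i; have [Hs _] := HB1 i; rewrite /ys mem_nth // Hs.
have Hxy : forall i, weq (xs i) (ys i) = false.
  move=> i; have [Hs [Hu _]] := HB1 i.
  by rewrite weqE /xs /ys nth_uniq // Hs.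
rewrite /cube; cbv beta zeta.
rewrite hasbE; apply/hasP; exists (xs L0, xs L1, xs L2); first exact: key.
rewrite hasbE; apply/hasP; exists (ys L0, ys L1, ys L2); first exact: key.
rewrite !Hxy allbE; apply/allP => c Hc; rewrite hasbE; apply/hasP; exists c; last by rewrite teqE.
by repeat (case/predU1P: Hc => [->|Hc]; first by apply: key => /=; rewrite ?Hx ?Hy).
Qed.

Lemma upper : brinkhuis_triple_pair 18 B_ex.
Proof.
split.
  move=> i; case: (letter_cases i) => [->|[->|->]].
  - have H : all (fun W => (size W == 18) && ~~ hsq W) (B_ex L0) by vm_compute.
    move/allP: H => H; split; first by []; split; first by vm_compute.
    by move=> W /H /andP [/eqP ? /negbTE /sfP].
  - have H : all (fun W => (size W == 18) && ~~ hsq W) (B_ex L1) by vm_compute.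
    move/allP: H => H; split; first by []; split; first by vm_compute.
    by move=> W /H /andP [/eqP ? /negbTE /sfP].
  - have H : all (fun W => (size W == 18) && ~~ hsq W) (B_ex L2) by vm_compute.
    move/allP: H => H; split; first by []; split; first by vm_compute.
    by move=> W /H /andP [/eqP ? /negbTE /sfP].
move=> w Hs Hsf W1 W2 W3 H1 H2 H3.
have Hw := gen_complete Hs Hsf.
have chk : allb (fun w => allb (fun W1 => allb (fun W2 => allb (fun W3 => ~~ hsq (W1 ++ W2 ++ W3))
   (B_ex (nth ord0 w 2))) (B_ex (nth ord0 w 1))) (B_ex (nth ord0 w 0))) (gen 3) by vm_compute.
move: chk; rewrite allbE => /allP /(_ w Hw); rewrite allbE => /allP /(_ W1 H1).
rewrite allbE => /allP /(_ W2 H2); rewrite allbE => /allP /(_ W3 H3).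
by move=> /negbTE /sfP.
Qed.

Theorem mainTheorem13 :
  (forall (n : nat) (B : 'I_3 -> seq (seq 'I_3)),
      brinkhuis_triple_pair n B -> 18 <= n) /\
  brinkhuis_triple_pair 18 B_ex.
Proof. split; [exact: lower | exact: upper]. Qed.
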